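(* There is an absolute constant $K$ such that for every integer $c \ge 0$ there is a deterministic finite automaton over the alphabet $\{0,1\}\times\{0,1\}$, reading its input most significant digit first, with at most $K\max(1,\log c)$ states (not counting a dead state), which accepts a word $x \times y$ (with $x,y$ valid Fibonacci representations of the same length) if and only if $[x] + c = [y]$.
   Context: Fibonacci numbers: $F_0=0$, $F_1=1$, $F_k=F_{k-1}+F_{k-2}$. For a binary word $x = x_1\cdots x_\ell$, $[x] = \sum_{j=1}^{\ell} x_j F_{\ell-j+2}$. A valid Fibonacci representation is a binary word with no factor $11$; leading zeros are allowed. For words $x=x_1\cdots x_\ell$, $y=y_1\cdots y_\ell$ of equal length, $x\times y$ denotes the word $(x_1,y_1)\cdots(x_\ell,y_\ell)$ over $\{0,1\}^2$; the shorter of two representations is padded with leading zeros. Transition functions may be partial; a dead state (from which no accepting state is reachable) is not counted. *)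

(* Defs.v *)
From mathcomp Require Import all_boot.
From Stdlib Require Import Reals.
Set Implicit Arguments. Unset Strict Implicit. Unset Printing Implicit Defensive.

Fixpoint fib (n : nat) : nat :=
  match n with
  | 0 => 0
  | S m => match m with 0 => 1 | S k => fib m + fib k end
  end.

(* [x] = sum_{j=1}^{l} x_j F_{l-j+2}, most significant digit first. *)
Fixpoint fibval (x : seq bool) : nat :=
  match x with
  | [::] => 0
  | b :: x' => (if b then fib (size x' + 2) else 0) + fibval x'
  end.

(* valid Fibonacci representation: no factor 11 (leading zeros allowed) *)
Definition fib_valid (x : seq bool) : bool := ~~ infix [:: true; true] x.

(* A DFA with n states (the states 'I_n), a start state, a partial
   transition function over the alphabet {0,1} x {0,1} (None = move to the
   uncounted dead state), and a set of accepting states. *)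
Fixpoint dfa_run (n : nat) (delta : 'I_n -> bool * bool -> option 'I_n)
  (q : option 'I_n) (w : seq (bool * bool)) : option 'I_n :=
  match w with
  | [::] => q
  | a :: w' => dfa_run delta (obind (fun p => delta p a) q) w'
  end.

Definition dfa_accepts (n : nat) (s : 'I_n)
  (delta : 'I_n -> bool * bool -> option 'I_n) (acc : {set 'I_n})
  (w : seq (bool * bool)) : bool :=
  match dfa_run delta (Some s) w with
  | Some q => q \in acc
  | None => false
  end.

(* Main.v *)
Require Import Defs.
From mathcomp Require Import all_boot zify.
From Stdlib Require Import Reals ZArith Lia Lra Psatz.

Definition fz (k : nat) : Z := Z.of_nat (fib k).
Definition b2z (b : bool) : Z := if b then 1%Z else 0%Z.
Definition step (p : Z * Z) (a : bool * bool) : Z * Z :=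
  ((p.1 + p.2 + (b2z a.2 - b2z a.1))%Z, p.1).
Definition ab (p : Z * Z) (w : seq (bool * bool)) : Z * Z := foldl step p w.

Lemma fibSS n : fib n.+2 = fib n.+1 + fib n.
Proof. by []. Qed.

Arguments fib : simpl never.

Lemma fzSS n : fz n.+2 = (fz n.+1 + fz n)%Z.
Proof. rewrite /fz fibSS; lia. Qed.

Lemma fib_le_S n : fib n <= fib n.+1.
Proof. case: n => [|[|n]] //; rewrite (fibSS n.+1); lia. Qed.

Lemma fib_mono m n : m <= n -> fib m <= fib n.
Proof.
move=> H; rewrite -(subnK H); elim: (n - m) => [|d IH] //.
by rewrite addSn; apply: leq_trans IH (fib_le_S _).
Qed.

Lemma fib_pos n : 1 <= fib n.+1.
Proof. by have := @fib_mono 1 n.+1 isT. Qed.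

Lemma fib_exp k : expn 2 k <= fib (2 * k).+1.
Proof.
elim: k => [|k IH] //.
have -> : (2 * k.+1).+1 = (2 * k).+3 by lia.
rewrite fibSS; have := fib_le_S (2 * k).+1; rewrite expnS; lia.
Qed.

Lemma fibval_bound u : fibval u + 1 <= fib (size u + 3).
Proof.
elim: u => [|b u IH] //.
have E : fib (size (b :: u) + 3) = fib (size u + 3) + fib (size u + 2).
  rewrite (_ : size (b :: u) + 3 = (size u + 2).+2); last by rewrite /=; lia.
  rewrite fibSS; congr (fib _ + fib _); lia.
rewrite E /=; clear E; case: b; lia.
Qed.

Lemma key x1 y1 x2 y2 p :
  size x1 = size y1 -> size x2 = size y2 ->
  (p.1 * fz (size x2 + size x1 + 2) + p.2 * fz (size x2 + size x1 + 1)
   + Z.of_nat (fibval (y1 ++ y2)) - Z.of_nat (fibval (x1 ++ x2)))%Z =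
  ((ab p (zip x1 y1)).1 * fz (size x2 + 2) + (ab p (zip x1 y1)).2 * fz (size x2 + 1)
   + Z.of_nat (fibval y2) - Z.of_nat (fibval x2))%Z.
Proof.
move=> Hs H2; elim: x1 y1 Hs p => [|bx x1 IH] [|yb y1] //= Hs p.
  by rewrite !addn0.
case: Hs => Hs.
rewrite -(IH y1 Hs (step p (bx, yb))) /= !size_cat -Hs -H2.
set NN := size x2 + size x1.
have -> : (size x2 + (size x1).+1 + 2 = NN.+1.+2) by rewrite /NN; lia.
have -> : (size x2 + (size x1).+1 + 1 = NN.+2) by rewrite /NN; lia.
have -> : (size x1 + size x2 + 2 = NN.+2) by rewrite /NN; lia.
have -> : (NN + 2 = NN.+2) by lia.
have -> : (NN + 1 = NN.+1) by lia.
rewrite (fzSS NN.+1) /fz /b2z; case: bx; case: yb; rewrite ?Nat2Z.inj_add /=; lia.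
Qed.
Section RealPart.
Local Open Scope R_scope.

Lemma absle a b : Rabs a <= b -> -b <= a <= b.
Proof. rewrite /Rabs; case: (Rcase_abs a); lra. Qed.

Definition gphi : R := (1 + sqrt 5) / 2.

Lemma sqrt5_bounds : 2.2 <= sqrt 5 <= 2.24.
Proof.
have H := sqrt_sqrt 5 ltac:(lra). have H0 := sqrt_pos 5.
split; nra.
Qed.

Lemma gphi_sq : gphi * gphi = gphi + 1.
Proof. rewrite /gphi. have H := sqrt_sqrt 5 ltac:(lra). nra. Qed.

Lemma gphi_bounds : 1.6 <= gphi <= 1.62.
Proof. rewrite /gphi. have := sqrt5_bounds. lra. Qed.

Definition Eb (p : Z * Z) : Prop := Rabs (IZR p.1 - gphi * IZR p.2) <= 3.

Lemma Eb_step p a : Eb p -> Eb (step p a).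
Proof.
rewrite /Eb /step /=. case: p => A B /= H.
have Hd : -1 <= IZR (b2z a.2 - b2z a.1) <= 1.
  rewrite /b2z; case: a.2; case: a.1; simpl; lra.
move: (b2z a.2 - b2z a.1)%Z Hd => d Hd.
rewrite !plus_IZR.
have -> : IZR A + IZR B + IZR d - gphi * IZR A = (1 - gphi) * (IZR A - gphi * IZR B) + IZR d.
  have Hs : gphi * gphi * IZR B = gphi * IZR B + IZR B by rewrite gphi_sq; ring.
  ring_simplify. ring_simplify in Hs. lra.
have [H1 H2] := absle _ _ H. have := gphi_bounds.
move=> Hp; apply: Rabs_le; nra.
Qed.

Lemma Eb_ab w p : Eb p -> Eb (ab p w).
Proof. elim: w p => [|a w IH] p //= Hp. apply: IH. exact: Eb_step. Qed.

End RealPart.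

Definition eqp (p p' : Z * Z) : bool := Z.eqb p.1 p'.1 && Z.eqb p.2 p'.2.

Lemma eqpP p p' : eqp p p' -> p = p'.
Proof. case: p p' => [a b] [a' b']; rewrite /eqp /= => /andP [/Z.eqb_spec -> /Z.eqb_spec ->] //. Qed.

Section Members.
Local Open Scope R_scope.

Definition G (t : nat) : R := gphi * IZR (fz (t + 2)) + IZR (fz (t + 1)).
Definition q (c t : nat) : R := IZR (Z.of_nat c) / G t.

Definition dec (c : nat) (k : nat) : Z * Z :=
  let t := k %/ 80 in
  let B := (up (q c t) - 5 + Z.of_nat ((k %% 80) %/ 8))%Z in
  ((up (gphi * IZR B) - 4 + Z.of_nat (k %% 8))%Z, B).

Definition Sset (c M : nat) : seq (Z * Z) := mkseq (dec c) (80 * M.+1).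

Lemma fz_nonneg k : 0 <= IZR (fz k).
Proof. apply: IZR_le; rewrite /fz; lia. Qed.

Lemma fz_pos k : 1 <= IZR (fz k.+1).
Proof. apply: IZR_le; rewrite /fz; have := fib_pos k; lia. Qed.

Lemma G_ge t : IZR (fz (t + 3)) <= G t /\ 0 < G t.
Proof.
have E : fz (t + 3) = (fz (t + 2) + fz (t + 1))%Z.
  rewrite (_ : t + 3 = (t + 1).+2)%nat; last by lia.
  by rewrite fzSS (_ : (t + 1).+1 = t + 2)%nat; last by lia.
rewrite /G E plus_IZR.
have := gphi_bounds. have := fz_nonneg (t + 2).
have := fz_pos t. rewrite (_ : (t.+1 = t + 1)%nat); last by lia.
move=> h1 h2 h3. split; nra.
Qed.

Lemma q_near A B m c : Eb (A, B) ->
  (- fz (m + 3) <= Z.of_nat c - A * fz (m + 2) - B * fz (m + 1) <= fz (m + 3))%Z ->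
  -4 <= IZR B - q c m <= 4.
Proof.
rewrite /Eb /= => /absle HE [H1 H2].
apply IZR_le in H1. apply IZR_le in H2.
rewrite !minus_IZR !mult_IZR opp_IZR in H1 H2.
have [HG HG0] := G_ge m.
have Hf := fz_nonneg (m + 2). have Hf1 := fz_nonneg (m + 1).
have Hq : IZR (Z.of_nat c) = q c m * G m by rewrite /q; field; lra.
rewrite Hq in H1 H2. move: H1 H2 HG HG0 HE Hf Hf1.
rewrite /G. set F2 := IZR (fz (m + 2)). set F1 := IZR (fz (m + 1)).
set F3 := IZR (fz (m + 3)). set Q := q c m.
move=> H1 H2 HG HG0 HE Hf Hf1.
have := gphi_bounds => Hp.
clearbody F1 F2 F3 Q.
set Y := gphi * F2 + F1 in H1 H2 HG HG0 *.
have HY2 : F2 <= Y by rewrite /Y; nra.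
have Id : (IZR B - Q) * Y = -(Q * Y - IZR A * F2 - IZR B * F1) - (IZR A - gphi * IZR B) * F2.
  rewrite /Y; ring.
have K0 : -3 * F2 <= (IZR A - gphi * IZR B) * F2 <= 3 * F2.
  move: HE Hf; clear; move: (IZR A - gphi * IZR B) => X HE Hf; split; nra.
clearbody Y.
have K1 : (IZR B - Q) * Y <= 4 * Y by lra.
have K2 : - 4 * Y <= (IZR B - Q) * Y by lra.
move: K1 K2 HG0; clear; move: (IZR B - Q) => Z0 K1 K2 HG0.
split; nra.
Qed.

Lemma mem_level c M t A B : (t <= M)%nat -> Eb (A, B) ->
  -5 < IZR B - q c t < 5 -> has (eqp (A, B)) (Sset c M).
Proof.
rewrite /Eb /= => HtM /absle HE [HB1 HB2].
set u := up (q c t). have [Hu1 Hu2] := archimed (q c t).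
have L1 : (u - 6 < B)%Z by apply: lt_IZR; rewrite minus_IZR; rewrite -/u in Hu1 Hu2; lra.
have L2 : (B < u + 5)%Z by apply: lt_IZR; rewrite plus_IZR; rewrite -/u in Hu1 Hu2; lra.
set v := up (gphi * IZR B). have [Hv1 Hv2] := archimed (gphi * IZR B).
have L3 : (v - 4 <= A)%Z by apply: le_IZR; rewrite minus_IZR; rewrite -/v in Hv1 Hv2; lra.
have L4 : (A < v + 3)%Z by apply: lt_IZR; rewrite plus_IZR; rewrite -/v in Hv1 Hv2; lra.
set j := Z.to_nat (B - (u - 5)). set a := Z.to_nat (A - (v - 4)).
have Hj : (j < 10)%nat by rewrite /j; lia.
have Ha : (a < 8)%nat by rewrite /a; lia.
apply/(@has_nthP _ (eqp (A, B)) (Sset c M) (0%Z, 0%Z)). exists (80 * t + 8 * j + a)%nat.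
  rewrite size_mkseq; lia.
rewrite nth_mkseq; last by lia.
rewrite /dec.
have -> : ((80 * t + 8 * j + a) %/ 80 = t)%nat by lia.
have -> : (((80 * t + 8 * j + a) %% 80) %/ 8 = j)%nat by lia.
have -> : ((80 * t + 8 * j + a) %% 8 = a)%nat by lia.
rewrite -/u.
have -> : (u - 5 + Z.of_nat j)%Z = B by rewrite /j; lia.
rewrite -/v.
have -> : (v - 4 + Z.of_nat a)%Z = A by rewrite /a; lia.
by rewrite /eqp /= !Z.eqb_refl.
Qed.

Lemma q_small c t : (c < fib (t + 3))%nat -> 0 <= q c t < 1.
Proof.
move=> H. have [HG HG0] := G_ge t.
have Hc : IZR (Z.of_nat c) + 1 <= IZR (fz (t + 3)).
  rewrite -plus_IZR; apply: IZR_le; rewrite /fz; lia.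
have Hc0 : 0 <= IZR (Z.of_nat c) by apply: IZR_le; lia.
rewrite /q; split.
  apply: Rmult_le_pos => //; apply: Rlt_le; apply: Rinv_0_lt_compat; lra.
apply: (Rmult_lt_reg_r (G t)) => //.
rewrite Rmult_assoc Rinv_l; lra.
Qed.

Lemma mem_live c M A B m : (c < fib (M + 3))%nat -> Eb (A, B) ->
  (- fz (m + 3) <= Z.of_nat c - A * fz (m + 2) - B * fz (m + 1) <= fz (m + 3))%Z ->
  has (eqp (A, B)) (Sset c M).
Proof.
move=> Hc HE Hw.
have [H1 H2] := @q_near A B m c HE Hw.
case: (leqP m M) => HmM.
  apply: (@mem_level c M m A B) => //; lra.
apply: (@mem_level c M M A B) => //.
have Hm : (c < fib (m + 3))%nat.
  apply: leq_trans Hc _; apply: fib_mono; lia.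
have := @q_small c M Hc. have := @q_small c m Hm. lra.
Qed.

End Members.

Definition dlt (S : seq (Z * Z)) (n : nat) (i : 'I_n) (a : bool * bool) : option 'I_n :=
  insub (find (eqp (step (nth (0%Z, 0%Z) S i) a)) S).

Arguments dlt S {n}.

Lemma run_None n (d : 'I_n -> bool * bool -> option 'I_n) w : dfa_run d None w = None.
Proof. by elim: w. Qed.

Section Run.
Variables (S : seq (Z * Z)) (n : nat).
Hypothesis HS : size S = n.

Lemma dlt_some (i : 'I_n) a j : dlt S i a = Some j ->
  nth (0%Z, 0%Z) S j = step (nth (0%Z, 0%Z) S i) a.
Proof.
rewrite /dlt; case: insubP => [k Hk Hkv [] <-|] //.
rewrite Hkv; apply/esym/eqpP; apply: nth_find.
by rewrite has_find HS.
Qed.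

Lemma dlt_has (i : 'I_n) a : has (eqp (step (nth (0%Z, 0%Z) S i) a)) S ->
  exists j, dlt S i a = Some j.
Proof.
rewrite has_find HS => H. rewrite /dlt insubT. by eexists.
Qed.

Lemma run_corr w (i : 'I_n) :
  match dfa_run (@dlt S n) (Some i) w with
  | Some j => nth (0%Z, 0%Z) S j = ab (nth (0%Z, 0%Z) S i) w
  | None => True end.
Proof.
elim: w i => [|a w IH] i //=.
case E: (dlt S i a) => [j|]; last by rewrite run_None.
have := IH j. rewrite (@dlt_some i a j E). by [].
Qed.

Lemma run_full w (i : 'I_n) :
  (forall k, k <= size w -> has (eqp (ab (nth (0%Z, 0%Z) S i) (take k w))) S) ->
  exists j, dfa_run (@dlt S n) (Some i) w = Some j.
Proof.
elim: w i => [|a w IH] i H /=; first by exists i.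
have H1 : has (eqp (step (nth (0%Z, 0%Z) S i) a)) S by have := H 1 isT; rewrite /= take0.
have [j Hj] := @dlt_has i a H1. rewrite Hj.
apply: IH => k Hk. rewrite (@dlt_some i a j Hj).
by have := H k.+1 Hk.
Qed.
End Run.

Lemma take_zip' (x y : seq bool) k : take k (zip x y) = zip (take k x) (take k y).
Proof.
elim: x y k => [|a x IH] [|b y] [|k] //=; try by rewrite IH.
all: by case: (take _ _).
Qed.

Lemma INR_expn2 L : INR (expn 2 L) = (2 ^ L)%R.
Proof.
elim: L => [|L IH]; first by rewrite expn0.
rewrite expnS (_ : (2 * expn 2 L)%nat = Nat.mul 2 (expn 2 L)) // mult_INR IH /=.
by [].
Qed.

Lemma fz02 : fz (0 + 2) = 1%Z. Proof. reflexivity. Qed.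
Lemma fz01 : fz (0 + 1) = 1%Z. Proof. reflexivity. Qed.

Lemma whole_val x y : size x = size y ->
  Z.of_nat (fibval y) = (Z.of_nat (fibval x) + (ab (0%Z, 0%Z) (zip x y)).1
                          + (ab (0%Z, 0%Z) (zip x y)).2)%Z.
Proof.
move=> H. have := @key x y [::] [::] (0%Z, 0%Z) H erefl.
rewrite /= !cats0 fz02 fz01. lia.
Qed.

Lemma bound_size c :
  (INR (80 * (2 * trunc_log 2 c).+1) <= 400 * Rmax 1 (ln (INR c)))%R.
Proof.
set L := trunc_log 2 c.
have -> : (80 * (2 * L).+1)%nat = Nat.add (Nat.mul 160 L) 80 by lia.
rewrite plus_INR mult_INR.
have E160 : INR 160 = 160%R by rewrite INR_IZR_INZ.
have E80 : INR 80 = 80%R by rewrite INR_IZR_INZ.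
rewrite E160 E80.
have HR1 := Rmax_l 1 (ln (INR c)). have HR2 := Rmax_r 1 (ln (INR c)).
have HL0 := pos_INR L.
case: (posnP c) => Hc.
  have -> : L = 0%nat by rewrite /L Hc trunc_log0.
  rewrite (_ : INR 0 = 0%R) //. lra.
have HP := trunc_logP (isT : 1 < 2) Hc. rewrite -/L in HP.
have HP' : (2 ^ L <= INR c)%R by rewrite -INR_expn2; apply: le_INR; apply/leP.
have H2 : (0 < 2 ^ L)%R by apply: pow_lt; lra.
have Hln : (INR L * ln 2 <= ln (INR c))%R.
  rewrite -ln_pow; last lra.
  case: (Rle_lt_or_eq_dec _ _ HP') => H.
    by apply: Rlt_le; apply: ln_increasing.
  by rewrite H; apply: Rle_refl.
have Hl2 := ln_lt_2.
have : (INR L <= 2 * ln (INR c))%R by nra.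
lra.
Qed.

Theorem theorem5 :
  exists K : R,
    forall c : nat,
      exists (n : nat) (s : 'I_n) (delta : 'I_n -> bool * bool -> option 'I_n)
             (acc : {set 'I_n}),
        (INR n <= K * Rmax 1 (ln (INR c)))%R /\
        forall x y : seq bool,
          size x = size y -> fib_valid x -> fib_valid y ->
          (dfa_accepts s delta acc (zip x y) <-> fibval x + c = fibval y).
Proof.
exists 400%R => c.
set L := trunc_log 2 c. set M := (2 * L)%nat.
set S := Sset c M. set n := (80 * M.+1)%nat.
have HS : size S = n by rewrite size_mkseq.
have Hc : c < fib (M + 3).
  have H1 := trunc_log_ltn c (isT : 1 < 2). rewrite -/L in H1.
  apply: leq_trans H1 _. have := fib_exp L.+1.
  by rewrite (_ : (2 * L.+1).+1 = M + 3); last by rewrite /M; lia.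
have H0 : has (eqp (0%Z, 0%Z)) S.
  apply: (@mem_live c M 0 0 M Hc).
    by rewrite /Eb /= Rmult_0_r Rminus_0_r Rabs_R0; lra.
  rewrite /fz; lia.
have Hs : find (eqp (0%Z, 0%Z)) S < n by rewrite -HS -has_find.
have Hs0 : nth (0%Z, 0%Z) S (Ordinal Hs) = (0%Z, 0%Z).
  by apply/esym/eqpP; apply: nth_find.
exists n, (Ordinal Hs), (@dlt S n),
  [set i : 'I_n | Z.eqb ((nth (0%Z, 0%Z) S i).1 + (nth (0%Z, 0%Z) S i).2) (Z.of_nat c)].
split; first exact: bound_size.
move=> x y Hxy _ _.
have Hw := whole_val x y Hxy.
rewrite /dfa_accepts. split.
  have := @run_corr S n HS (zip x y) (Ordinal Hs).
  case: (dfa_run _ _ _) => [j|] // Hj.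
  rewrite inE Hj Hs0 => /Z.eqb_spec Hsum. lia.
move=> Heq.
have Hlive : forall k, k <= size (zip x y) ->
    has (eqp (ab (nth (0%Z, 0%Z) S (Ordinal Hs)) (take k (zip x y)))) S.
  move=> k Hk. rewrite Hs0 take_zip'.
  have Hk1 : size (take k x) = size (take k y) by rewrite !size_take Hxy.
  have Hk2 : size (drop k x) = size (drop k y) by rewrite !size_drop Hxy.
  have := @key (take k x) (take k y) (drop k x) (drop k y) (0%Z, 0%Z) Hk1 Hk2.
  rewrite !cat_take_drop /=.
  set A := (ab _ _).1. set B := (ab _ _).2.
  have HE : Eb (A, B).
    have := @Eb_ab (zip (take k x) (take k y)) (0%Z, 0%Z).
    rewrite /A /B; case: (ab _ _) => a b /=; apply.
    by rewrite /Eb /= Rmult_0_r Rminus_0_r Rabs_R0; lra.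
  have Bx := fibval_bound (drop k x). have By := fibval_bound (drop k y).
  rewrite -Hk2 in By.
  move: (size (drop k x)) Bx By => m Bx By Hkey.
  apply: (@mem_live c M A B m Hc HE).
  rewrite /fz. move: Hkey. rewrite /fz. lia.
have [j Hj] := @run_full S n HS (zip x y) (Ordinal Hs) Hlive.
rewrite Hj.
have := @run_corr S n HS (zip x y) (Ordinal Hs). rewrite Hj Hs0 => Hab.
rewrite inE Hab. apply/Z.eqb_spec. lia.
Qed.
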